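(* Let $\mathbb{P}$ be a Pawlikowski lattice satisfying $\mathsf{S}_1(\mathbb{V}_1,\mathbb{V}_1)$. Then Player I does not have a winning strategy in the game $\mathsf{G}_1(\mathbb{V}_1,\mathbb{V}_1)$.
   Context: A lattice is a poset where any two elements have a supremum and an infimum; it is bounded if it has a minimum $0$ and a maximum $1$. A prime element is $q\neq 1$ with: $a\wedge b\leq q$ implies $a\leq q$ or $b\leq q$. Enough prime elements: whenever $a\not\leq b$ there is a prime $q$ with $b\leq q$, $a\not\leq q$. A Pawlikowski lattice is a bounded lattice with enough prime elements such that $(\sup A)\wedge b=\sup\{a\wedge b:a\in A\}$ for every $b\in\mathbb{P}$ and every subset $A\subseteq\mathbb{P}$ having a supremum. $\mathbb{V}_1$ is the family of subsets $A\subseteq\mathbb{P}$ with $\sup A=1$. $\mathsf{S}_1(\mathbb{V}_1,\mathbb{V}_1)$: for every sequence $(A_n)_{n\in\omega}$ in $\mathbb{V}_1$ there are $a_n\in A_n$ with $\sup\{a_n:n\in\omega\}=1$. The game $\mathsf{G}_1(\mathbb{V}_1,\mathbb{V}_1)$: in inning $n\in\omega$ Player I plays $A_n\in\mathbb{V}_1$ and Player II picks $a_n\in A_n$; Player II wins if $\sup\{a_n:n\in\omega\}=1$, otherwise Player I wins. A strategy for Player I assigns Player I's move to each finite sequence of Player II's previous moves; it is winning if Player I wins every play following it. *)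

(* Defs.v *)
From HB Require Import structures.
From mathcomp Require Import all_boot all_order.
Set Implicit Arguments. Unset Strict Implicit. Unset Printing Implicit Defensive.
Import Order.TTheory.
Local Open Scope order_scope.

Section Pawlikowski.
Context {d : Order.disp_t} {T : tbLatticeType d}.

Definition is_sup (A : T -> Prop) (s : T) : Prop :=
  (forall a, A a -> a <= s) /\ (forall u, (forall a, A a -> a <= u) -> s <= u).

Definition prime_elt (q : T) : Prop :=
  q != \top /\ forall a b, a `&` b <= q -> a <= q \/ b <= q.

Definition enough_primes : Prop :=
  forall a b : T, ~ (a <= b) -> exists q, prime_elt q /\ b <= q /\ ~ (a <= q).

Definition meet_distributes_sup : Prop :=
  forall (b : T) (A : T -> Prop) (s : T), is_sup A s ->
    is_sup (fun x => exists2 a, A a & x = a `&` b) (s `&` b).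

Definition pawlikowski : Prop := enough_primes /\ meet_distributes_sup.

Definition V1 (A : T -> Prop) : Prop := is_sup A \top.

Definition range_of (a : nat -> T) : T -> Prop := fun x => exists n, x = a n.

Definition S1_V1_V1 : Prop :=
  forall An : nat -> (T -> Prop), (forall n, V1 (An n)) ->
    exists a : nat -> T, (forall n, An n (a n)) /\ V1 (range_of a).

(* A strategy for Player I: to each finite sequence of Player II's previous
   moves it assigns a legal move (an element of V_1). *)
Definition strategyI (sigma : seq T -> (T -> Prop)) : Prop :=
  forall s, V1 (sigma s).

Definition follows (sigma : seq T -> (T -> Prop)) (a : nat -> T) : Prop :=
  forall n, sigma (mkseq a n) (a n).

Definition winning_strategyI (sigma : seq T -> (T -> Prop)) : Prop :=
  strategyI sigma /\ forall a, follows sigma a -> ~ V1 (range_of a).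

End Pawlikowski.

(* Main.v *)
Require Import Defs.
From HB Require Import structures.
From mathcomp Require Import all_boot all_order.
From Stdlib Require Import ClassicalEpsilon Classical.
Set Implicit Arguments. Unset Strict Implicit. Unset Printing Implicit Defensive.
Import Order.TTheory.
Local Open Scope order_scope.

Section Basics.
Context {d : Order.disp_t} {T : tbLatticeType d}.
Hypothesis EP : @enough_primes d T.

Lemma V1_of_primes (A : T -> Prop) :
  (forall q : T, prime_elt q -> exists a, A a /\ ~~ (a <= q)) -> V1 A.
Proof.
move=> H; split=> [a _|u ub]; first exact: lex1.
apply/negPn/negP => /negP ntu.
have [q [pq [uq ntq]]] := EP ntu.
have [a [Aa naq]] := H q pq.
by move/negP: naq; apply; apply: le_trans (ub a Aa) uq.
Qed.

Lemma primes_of_V1 (A : T -> Prop) q :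
  V1 A -> prime_elt q -> exists a, A a /\ ~~ (a <= q).
Proof.
move=> [_ sup] [ntop _]; apply: NNPP => nex.
have : \top <= q.
  apply: sup => a Aa; apply/negPn/negP => naq; apply: nex; by exists a.
by rewrite le1x (negbTE ntop).
Qed.

Lemma prime_meet (q a b : T) : prime_elt q -> ~~ (a <= q) -> ~~ (b <= q) -> ~~ (a `&` b <= q).
Proof.
move=> [_ pr] na nb; apply/negP => /pr [] ?; [by move/negP: na | by move/negP: nb].
Qed.

Lemma prime_top (q : T) : prime_elt q -> ~~ (\top <= q).
Proof. by move=> [ntop _]; rewrite le1x. Qed.

Lemma prime_meets (I : eqType) (l : seq I) (F : I -> T) (q : T) : prime_elt q ->
  (forall x, x \in l -> ~~ (F x <= q)) -> ~~ (\meet_(x <- l) F x <= q).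
Proof.
move=> pq; elim: l => [|x l IH] H; first by rewrite big_nil prime_top.
rewrite big_cons; apply: prime_meet => //; first by apply: H; rewrite mem_head.
by apply: IH => y yl; apply: H; rewrite in_cons yl orbT.
Qed.

End Basics.
Section Main.
Context {d : Order.disp_t} {T : tbLatticeType d}.
Hypothesis EP : @enough_primes d T.
Hypothesis S1 : @S1_V1_V1 d T.
Variable sigma : seq T -> (T -> Prop).
Hypothesis strat : strategyI sigma.

Definition uS (p : seq T) :
  {a : nat -> T | (forall n, sigma p (a n)) /\ V1 (range_of a)} :=
  constructive_indefinite_description _ (S1 (An:=fun _ => sigma p) (fun _ => strat p)).
Definition u (p : seq T) (c : nat) : T := proj1_sig (uS p) c.

Lemma u_in p c : sigma p (u p c).
Proof. exact: (proj1 (proj2_sig (uS p))). Qed.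

Lemma u_V1 p : V1 (range_of (u p)).
Proof. exact: (proj2 (proj2_sig (uS p))). Qed.

Definition Pos (s : seq nat) : seq T := foldl (fun p c => rcons p (u p c)) [::] s.

Lemma PosS s c : Pos (rcons s c) = rcons (Pos s) (u (Pos s) c).
Proof. by rewrite /Pos foldl_rcons. Qed.

Definition J (s : seq nat) (b : nat) : T := \join_(c <- iota 0 b) u (Pos s) c.

Fixpoint all_seqs (n a : nat) : seq (seq nat) :=
  if n is n'.+1 then [seq rcons s c | s <- all_seqs n' a, c <- iota 0 a]
  else [:: [::]].

Definition E (n a b : nat) : T := \meet_(s <- all_seqs n a) J s b.

Lemma J_mono s b b' : (b <= b')%N -> J s b <= J s b'.
Proof.
move=> bb; apply/joinsP_seq => c cin _; apply: joins_sup_seq => //.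
by move: cin; rewrite !mem_iota !add0n => /leq_trans; apply.
Qed.

Lemma J_ex s b q : ~~ (J s b <= q) -> exists c, (c < b)%N /\ ~~ (u (Pos s) c <= q).
Proof.
move=> nJ; apply: NNPP => nex; move/negP: nJ; apply; apply/joinsP_seq => c cin _.
apply/negPn/negP => ncq; apply: nex; exists c; split=> //.
by move: cin; rewrite mem_iota.
Qed.

Lemma J_of s b q c : (c < b)%N -> ~~ (u (Pos s) c <= q) -> ~~ (J s b <= q).
Proof.
move=> cb ncq; apply/negP => Jq; move/negP: ncq; apply; apply: le_trans Jq.
by apply: joins_sup_seq => //; rewrite mem_iota.
Qed.

Lemma all_seqs_mono n a a' : (a <= a')%N -> {subset all_seqs n a <= all_seqs n a'}.
Proof.
move=> aa; elim: n => [|n IH] //= s /allpairsP [[s0 c] [/= s0in cin ->]].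
apply: allpairs_f; first exact: IH.
by move: cin; rewrite !mem_iota !add0n => /leq_trans; apply.
Qed.

Lemma all_seqs_rcons n a s c : s \in all_seqs n a -> (c < a)%N -> rcons s c \in all_seqs n.+1 a.
Proof. by move=> sin ca /=; apply: allpairs_f => //; rewrite mem_iota. Qed.

Lemma E_anti n a a' b : (a <= a')%N -> E n a' b <= E n a b.
Proof.
move=> aa; apply/meetsP_seq => s sin _; apply: meets_inf_seq => //.
exact: all_seqs_mono sin.
Qed.

Lemma E_mono n a b b' : (b <= b')%N -> E n a b <= E n a b'.
Proof.
move=> bb; apply/meetsP_seq => s sin _; apply: meets_max_seq sin _ _ => //.
exact: J_mono.
Qed.

Lemma E_J n a b s q : ~~ (E n a b <= q) -> s \in all_seqs n a -> ~~ (J s b <= q).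
Proof.
move=> nE sin; apply/negP => Jq; move/negP: nE; apply.
by apply: meets_max_seq sin _ Jq.
Qed.

Lemma J_event s q : prime_elt q -> exists b, ~~ (J s b <= q).
Proof.
move=> pq; have [a [[c ->] ncq]] := primes_of_V1 (u_V1 (Pos s)) pq.
by exists c.+1; apply: J_of ncq.
Qed.

Lemma E_event n a q : prime_elt q -> exists b, ~~ (E n a b <= q).
Proof.
move=> pq.
suff [b Hb] : exists b, forall s, s \in all_seqs n a -> ~~ (J s b <= q).
  by exists b; apply: prime_meets.
elim: (all_seqs n a) => [|s l [b Hb]]; first by exists 0.
have [b' Hb'] := J_event s pq.
exists (maxn b b') => x; rewrite in_cons => /orP [/eqP ->|xl].
  apply/negP => Jq; move/negP: Hb'; apply; apply: le_trans Jq; apply: J_mono.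
  exact: leq_maxr.
apply/negP => Jq; move/negP: (Hb x xl); apply; apply: le_trans Jq; apply: J_mono.
exact: leq_maxl.
Qed.


Fixpoint R (t : seq nat) (k b : nat) : T :=
  if k is k'.+1 then \join_(b' <- iota 0 b.+1) (R t k' b' `&` E (size t + k) b' b)
  else E (size t) (last 0 t) b.

Lemma R_S t k b :
  R t k.+1 b = \join_(b' <- iota 0 b.+1) (R t k b' `&` E (size t + k.+1) b' b).
Proof. by []. Qed.

Lemma R_mono t k b b' : (b <= b')%N -> R t k b <= R t k b'.
Proof.
case: k => [|k] bb; first exact: E_mono.
rewrite !R_S; apply/joinsP_seq => c cin _; apply: (@joins_min_seq _ _ _ _ _ _ c).
- by move: cin; rewrite !mem_iota !add0n !ltnS => /leq_trans; apply.
- by [].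
by apply: leI2 => //; apply: E_mono.
Qed.

Lemma R_event t k q : prime_elt q -> exists b, ~~ (R t k b <= q).
Proof.
move=> pq; elim: k => [|k [b0 Hb0]]; first exact: E_event.
have [b1 Hb1] := E_event (size t + k.+1) b0 pq.
exists (maxn b0 b1); rewrite R_S; apply/negP => Jq.
have : R t k b0 `&` E (size t + k.+1) b0 (maxn b0 b1) <= q.
  apply: le_trans Jq.
  apply: (@joins_sup_seq _ _ _ _ _ (fun b' => R t k b' `&` E (size t + k.+1) b' (maxn b0 b1)) b0) => //.
  by rewrite mem_iota add0n ltnS leq_maxl.
apply/negP; apply: prime_meet => //.
apply/negP => Eq; move/negP: Hb1; apply; apply: le_trans Eq; apply: E_mono.
exact: leq_maxr.
Qed.

Definition alpha (beta : nat -> nat) (n : nat) : nat :=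
  if n is n'.+1 then beta n' else 0.

Lemma last_mkseq (beta : nat -> nat) N : last 0 (mkseq beta N) = alpha beta N.
Proof. by case: N => [|N] //; rewrite mkseqS last_rcons. Qed.

Lemma R_fail (beta : nat -> nat) (q : T) N :
  {homo beta : m n / (m <= n)%N} ->
  (forall n, (N <= n)%N -> E n (alpha beta n) (beta n) <= q) ->
  forall k, R (mkseq beta N) k (beta (N + k)) <= q.
Proof.
move=> hb Hf; elim=> [|k IH].
  by rewrite /= size_mkseq last_mkseq addn0; apply: Hf.
rewrite R_S size_mkseq; apply/joinsP_seq => b' _ _.
case: (leqP b' (beta (N + k))) => bl.
  by apply: leIxl; apply: le_trans IH; apply: R_mono.
apply: leIxr; apply: le_trans (Hf (N + k.+1) (leq_addr _ _)).
rewrite addnS /=; apply: E_anti; exact: ltnW.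
Qed.


Definition Cfam (t : seq nat) (k : nat) : T -> Prop :=
  fun x => exists b, x = R t (pickle t + k) b.

Lemma Cfam_V1 t k : V1 (Cfam t k).
Proof.
apply: (V1_of_primes EP) => q pq; have [b Hb] := R_event t (pickle t + k) pq.
by exists (R t (pickle t + k) b); split => //; exists b.
Qed.

Definition selS (t : seq nat) :
  {a : nat -> T | (forall k, Cfam t k (a k)) /\ V1 (range_of a)} :=
  constructive_indefinite_description _ (S1 (An := Cfam t) (Cfam_V1 t)).
Definition sel t := proj1_sig (selS t).

Definition hhS t k := constructive_indefinite_description _ (proj1 (proj2_sig (selS t)) k).
Definition hh t k : nat := proj1_sig (hhS t k).

Lemma sel_hh t k : sel t k = R t (pickle t + k) (hh t k).
Proof. exact: (proj2_sig (hhS t k)). Qed.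

Lemma sel_V1 t : V1 (range_of (sel t)).
Proof. exact: (proj2 (proj2_sig (selS t))). Qed.

Definition Bfun (n : nat) : nat :=
  \max_(j < n.+1) (if @unpickle (seq nat) j is Some t then
      (if (size t + pickle t <= n)%N then hh t (n - (size t + pickle t)) else 0) else 0).

Fixpoint beta (n : nat) : nat :=
  if n is n'.+1 then maxn (beta n') (Bfun n).+1 else (Bfun 0).+1.

Lemma beta_homo : {homo beta : m n / (m <= n)%N}.
Proof. by apply: homo_leq => [//|y x z|n]; [exact: leq_trans | exact: leq_maxl]. Qed.

Lemma beta_ge n : (Bfun n < beta n)%N.
Proof. by case: n => [|n] //=; exact: leq_maxr. Qed.

Lemma beta_pos n : (0 < beta n)%N.
Proof. exact: leq_ltn_trans (beta_ge n). Qed.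

Lemma hh_le t k : (hh t k <= Bfun (size t + pickle t + k))%N.
Proof.
set n := (size t + pickle t + k).
have jn : (pickle t < n.+1)%N by rewrite ltnS /n -addnA addnCA leq_addr.
rewrite /Bfun; apply: leq_trans (leq_bigmax (Ordinal jn)).
have := pickleK t; move/(congr1 (odflt [::])) => /= ->.
by rewrite /n leq_addr addKn.
Qed.

Lemma star q : prime_elt q -> forall N,
  exists n, (N <= n)%N /\ ~~ (E n (alpha beta n) (beta n) <= q).
Proof.
move=> pq N; apply: NNPP => nex.
have Hf : forall n, (N <= n)%N -> E n (alpha beta n) (beta n) <= q.
  move=> n Nn; apply/negPn/negP => nE; apply: nex; by exists n.
set t := mkseq beta N.
have [a [[k ->] naq]] := primes_of_V1 (sel_V1 t) pq.
move/negP: naq; apply; rewrite sel_hh.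
have := R_fail beta_homo Hf (pickle t + k).
apply: le_trans; apply: R_mono.
apply: leq_trans (hh_le t k) _.
by rewrite /t size_mkseq -addnA; apply: ltnW (beta_ge _).
Qed.


Definition W (n : nat) (phi : seq nat -> nat) : T :=
  \meet_(s <- all_seqs n (alpha beta n)) u (Pos s) (phi s).

Definition Dprop (N : nat) (x : T) (p : seq nat * (seq nat -> nat)) : Prop :=
  [/\ size p.1 = N.+1, uniq p.1, all (fun n => N <= n)%N p.1,
      (forall n s, n \in p.1 -> s \in all_seqs n (alpha beta n) -> (p.2 s < beta n)%N)
    & x = \meet_(n <- p.1) W n p.2].

Definition Dfam N : T -> Prop := fun x => exists p, Dprop N x p.

Lemma good_levels q : prime_elt q -> forall N m, exists ls : seq nat,
  [/\ size ls = m, uniq ls, all (fun n => N <= n)%N ls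
    & all (fun n => ~~ (E n (alpha beta n) (beta n) <= q)) ls].
Proof.
move=> pq N; elim=> [|m [ls [sz un aN ag]]]; first by exists [::].
have [n [Mn gn]] := star pq (maxn N (\max_(x <- ls) x).+1).
exists (n :: ls); split => /=.
- by rewrite sz.
- rewrite un andbT; apply/negP => nin.
  have := @leq_bigmax_seq _ ls predT (fun x => x) n nin isT.
  by move: Mn; rewrite geq_max => /andP[_] /leq_trans H /H; rewrite ltnn.
- by rewrite aN andbT; move: Mn; rewrite geq_max => /andP[].
- by rewrite gn ag.
Qed.

Lemma ex_c q s : prime_elt q -> exists c, ~~ (u (Pos s) c <= q).
Proof. by move=> pq; have [a [[c ->] ncq]] := primes_of_V1 (u_V1 (Pos s)) pq; exists c. Qed.

Lemma Dfam_V1 N : V1 (Dfam N).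
Proof.
apply: (V1_of_primes EP) => q pq.
have [ls [sz un aN ag]] := good_levels pq N N.+1.
pose phi s := ex_minn (ex_c s pq).
have phiP s : ~~ (u (Pos s) (phi s) <= q) by rewrite /phi; case: ex_minnP.
have phimin s c : ~~ (u (Pos s) c <= q) -> (phi s <= c)%N.
  by rewrite /phi; case: ex_minnP => m _ H /H.
exists (\meet_(n <- ls) W n phi); split; last first.
  by apply: prime_meets => // n nin; apply: prime_meets => // s sin; apply: phiP.
exists (ls, phi); split => //= n s nin sin.
have gn := allP ag n nin.
have [c [cb ncq]] := J_ex (E_J gn sin).
exact: leq_ltn_trans (phimin _ _ ncq) cb.
Qed.

Definition selD := constructive_indefinite_description _ (S1 (An := Dfam) Dfam_V1).
Definition selDs N := proj1_sig selD N.
Definition pDS N := constructive_indefinite_description _ (proj1 (proj2_sig selD) N).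
Definition pD N := proj1_sig (pDS N).
Lemma pD_spec N : Dprop N (selDs N) (pD N).
Proof. exact: (proj2_sig (pDS N)). Qed.
Lemma selD_V1 : V1 (range_of selDs).
Proof. exact: (proj2 (proj2_sig selD)). Qed.

Definition lsN N := (pD N).1.
Definition phiN N := (pD N).2.

Definition rpick N (L : seq nat) := head 0 [seq n <- lsN N | n \notin L].
Fixpoint rs N := if N is N'.+1 then rcons (rs N') (rpick N' (rs N')) else [::].
Definition r N := rpick N (rs N).

Lemma size_rs N : size (rs N) = N.
Proof. by elim: N => //= N IH; rewrite size_rcons IH. Qed.

Lemma r_spec N : r N \in lsN N /\ r N \notin rs N.
Proof.
have [sz un _ _ _] := pD_spec N.
have : [seq n <- lsN N | n \notin rs N] != [::].
  apply/negP => /eqP H0.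
  have sub : {subset lsN N <= rs N}.
    move=> x xin; apply/negPn/negP => xn.
    have : x \in [seq n <- lsN N | n \notin rs N] by rewrite mem_filter xn.
    by rewrite H0.
  by have := uniq_leq_size un sub; rewrite /lsN sz size_rs ltnn.
rewrite /r /rpick; case E: [seq n <- lsN N | n \notin rs N] => [|y l] // _.
have : y \in [seq n <- lsN N | n \notin rs N] by rewrite E mem_head.
by rewrite mem_filter => /andP[yn yin].
Qed.

Lemma r_in_rs M N : (M < N)%N -> r M \in rs N.
Proof.
elim: N => // N IH; rewrite ltnS leq_eqVlt => /orP[/eqP->|MN] /=.
  by rewrite mem_rcons mem_head.
by rewrite mem_rcons in_cons IH ?orbT.
Qed.

Lemma r_inj M N : r M = r N -> M = N.
Proof.
move=> HMN; case: (ltngtP M N) => // lt.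
  by have := (r_spec N).2; rewrite -HMN r_in_rs.
by have := (r_spec M).2; rewrite HMN r_in_rs.
Qed.

Lemma r_ge N : (N <= r N)%N.
Proof. by have [_ _ aN _ _] := pD_spec N; exact: (allP aN _ (r_spec N).1). Qed.

Definition mv (n : nat) (s : seq nat) : nat :=
  if [pick N : 'I_n.+1 | r N == n] is Some N then phiN N s else 0.

Lemma mv_r N s : mv (r N) s = phiN N s.
Proof.
rewrite /mv; case: pickP => [M /eqP HM | H]; first by rewrite (r_inj HM).
have NN : (N < (r N).+1)%N by rewrite ltnS r_ge.
by have := H (Ordinal NN); rewrite /= eqxx.
Qed.

Lemma mv_bound n s : s \in all_seqs n (alpha beta n) -> (mv n s < beta n)%N.
Proof.
rewrite /mv; case: pickP => [M /eqP HM | _] sin; last exact: beta_pos.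
have [_ _ _ bd _] := pD_spec M.
have nin : n \in (pD M).1 by move: (r_spec M).1; rewrite HM.
exact: bd nin sin.
Qed.

Fixpoint tpos n : seq nat := if n is n'.+1 then rcons (tpos n') (mv n' (tpos n')) else [::].
Definition play n : T := u (Pos (tpos n)) (mv n (tpos n)).

Lemma tpos_in n : tpos n \in all_seqs n (alpha beta n).
Proof.
elim: n => [|n IH] /=; first by rewrite mem_head.
apply: all_seqs_rcons; last exact: mv_bound.
apply: all_seqs_mono IH; case: n => [|n] //=; exact: leq_maxl.
Qed.

Lemma mkseq_play n : mkseq play n = Pos (tpos n).
Proof. by elim: n => [|n IH] //; rewrite mkseqS IH /= PosS. Qed.

Lemma play_follows : follows sigma play.
Proof. by move=> n; rewrite mkseq_play; apply: u_in. Qed.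

Lemma play_V1 : V1 (range_of play).
Proof.
have [_ sup] := selD_V1; split=> [a _|v ub]; first exact: lex1.
apply: sup => a [N ->].
have [_ _ _ _ ->] := pD_spec N.
apply: le_trans (ub _ (ex_intro _ (r N) erefl)).
apply: (meets_max_seq (x:=r N)) (r_spec N).1 _ _ => //.
rewrite /play mv_r; apply: meets_inf_seq => //; exact: tpos_in.
Qed.

End Main.

Theorem theorem2p4 (d : Order.disp_t) (T : tbLatticeType d) :
  @pawlikowski d T -> @S1_V1_V1 d T ->
  ~ exists sigma : seq T -> (T -> Prop), winning_strategyI sigma.
Proof.
move=> [EP _] S1 [sigma [strat win]].
exact: (win _ (play_follows EP S1 strat) (play_V1 EP S1 strat)).
Qed.
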